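(* Fix $x\in\mathbf{X}\cup\mathbf{X}^+$. (i) Suppose $H_{TP^+}(x)\le\delta$, and define OOD detectors by $\mathbf{P}'_k(x\in\mathbf{X}_k\mid D)=\mathbf{P}(x\in\mathbf{X}_k\mid D)$, $k=1,\dots,T$. Then $H_{OOD^+,k}(x)\le\delta$ for all $k=1,\dots,T$. (ii) Suppose OOD detectors satisfy $H_{OOD^+,k}(x)\le\delta_k$ for $k=1,\dots,T$, and define the open-world task-id prediction by $$\mathbf{P}(x\in\mathbf{X}_k\mid D)=\frac{\mathbf{P}'_k(x\in\mathbf{X}_k\mid D)}{\sum_{k'}\mathbf{P}'_{k'}(x\in\mathbf{X}_{k'}\mid D)+\prod_{k'}(1-\mathbf{P}'_{k'}(x\in\mathbf{X}_{k'}\mid D))},\qquad \mathbf{P}(x\in\mathbf{X}^+\mid D)=\frac{\prod_{k'}(1-\mathbf{P}'_{k'}(x\in\mathbf{X}_{k'}\mid D))}{\sum_{k'}\mathbf{P}'_{k'}(x\in\mathbf{X}_{k'}\mid D)+\prod_{k'}(1-\mathbf{P}'_{k'}(x\in\mathbf{X}_{k'}\mid D))}.$$ Then $$H_{TP^+}(x)\le\max\Big(\big(\textstyle\sum_k\mathbf{1}_{x\in\mathbf{X}_k}e^{\delta_k}\big)\big(\sum_k(1+\mathbf{1}_{x\in\mathbf{X}_k})(1-e^{-\delta_k})\big),\ \prod_k e^{\delta_k}\sum_k(1-e^{-\delta_k})\Big),$$ where $\mathbf{1}_{x\in\mathbf{X}_k}$ is the indicator of $x\in\mathbf{X}_k$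.
   Context: Open-world setting. $\mathbf{X}$ is the disjoint union of task domains $\mathbf{X}_1,\dots,\mathbf{X}_T$, and $\mathbf{X}^+$ is an open-world OOD domain disjoint from $\mathbf{X}$. $D$ is a fixed conditioning event. An open-world task-id prediction (TP$^+$) is a probability distribution over the $T+1$ outcomes $\{\mathbf{P}(x\in\mathbf{X}_k\mid D)\}_{k=1}^T\cup\{\mathbf{P}(x\in\mathbf{X}^+\mid D)\}$ (nonnegative, summing to $1$), with $H_{TP^+}(x)=-\log\mathbf{P}(x\in\mathbf{X}_{k_0}\mid D)$ if $x\in\mathbf{X}_{k_0}$ and $H_{TP^+}(x)=-\log\mathbf{P}(x\in\mathbf{X}^+\mid D)$ if $x\in\mathbf{X}^+$. An OOD detector for task $k$ is a value $\mathbf{P}'_k(x\in\mathbf{X}_k\mid D)\in[0,1]$ with $\mathbf{P}'_k(x\in(\mathbf{X}\cup\mathbf{X}^+)\setminus\mathbf{X}_k\mid D)=1-\mathbf{P}'_k(x\in\mathbf{X}_k\mid D)$; its open-world cross-entropy is $H_{OOD^+,k}(x)=-\log\mathbf{P}'_k(x\in\mathbf{X}_k\mid D)$ if $x\in\mathbf{X}_k$ and $H_{OOD^+,k}(x)=-\log\mathbf{P}'_k(x\in(\mathbf{X}\cup\mathbf{X}^+)\setminus\mathbf{X}_k\mid D)$ if $x\in(\mathbf{X}\cup\mathbf{X}^+)\setminus\mathbf{X}_k$. *)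

(* Defs.v *)
From HB Require Import structures.
From mathcomp Require Import all_boot all_order all_algebra.
From mathcomp Require Import reals ereal.
From mathcomp Require Import sequences exp.
Set Implicit Arguments. Unset Strict Implicit. Unset Printing Implicit Defensive.
Import Order.TTheory GRing.Theory Num.Theory.
Local Open Scope ring_scope.

(* Location of the fixed input x in X ∪ X^+ :
   [Some k] means x ∈ X_k (task k, 0-indexed), [None] means x ∈ X^+.
   Since X_1,...,X_T, X^+ are pairwise disjoint, this is exactly one outcome. *)

Definition nlog (R : realType) (p : R) : \bar R :=
  if 0 < p then (- ln p)%:E else +oo%E.

Definition is_TP (R : realType) (T : nat) (P : option 'I_T -> R) : Prop :=
  (forall o, 0 <= P o) /\ \sum_(o : option 'I_T) P o = 1.

Definition H_TP (R : realType) (T : nat) (P : option 'I_T -> R)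
  (loc : option 'I_T) : \bar R := nlog (P loc).

(* OOD detectors: q k = P'_k(x ∈ X_k | D) ∈ [0,1];
   H_{OOD^+,k}(x) *)
Definition is_OOD (R : realType) (T : nat) (q : 'I_T -> R) : Prop :=
  forall k, 0 <= q k <= 1.

Definition H_OOD (R : realType) (T : nat) (q : 'I_T -> R) (k : 'I_T)
  (loc : option 'I_T) : \bar R :=
  if loc == Some k then nlog (q k) else nlog (1 - q k).

Definition TP_of_OOD (R : realType) (T : nat) (q : 'I_T -> R) :
    option 'I_T -> R :=
  fun o =>
    let den := \sum_(k < T) q k + \prod_(k < T) (1 - q k) in
    match o with
    | Some k => q k / den
    | None => (\prod_(k < T) (1 - q k)) / den
    end.

Definition ind (R : realType) (T : nat) (loc : option 'I_T) (k : 'I_T) : R :=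
  (loc == Some k)%:R.

(* Main.v *)
Require Import Defs.
From HB Require Import structures.
From mathcomp Require Import all_boot all_order all_algebra.
From mathcomp Require Import reals ereal.
From mathcomp Require Import sequences exp.
From mathcomp Require Import ring lra.
Import Order.TTheory GRing.Theory Num.Theory.
Local Open Scope ring_scope.

Section Helpers.
Context {R : realType}.

Lemma nlog_le (p d : R) : (nlog p <= d%:E)%E -> 0 < p /\ expR (- d) <= p.
Proof.
rewrite /nlog; case: ifP => // p0; rewrite lee_fin => h; split => //.
rewrite -(lnK p0); rewrite ler_expR; lra.
Qed.

Lemma nlog_mono (a p d : R) : 0 < a -> a <= p -> (nlog a <= d%:E)%E ->
  (nlog p <= d%:E)%E.
Proof.
move=> a0 ap; rewrite /nlog a0 (lt_le_trans a0 ap) !lee_fin => h.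
apply: le_trans h; rewrite lerN2 ler_ln ?posrE //; exact: lt_le_trans ap.
Qed.

Lemma ln_le_sub1 (x : R) : 0 < x -> ln x <= x - 1.
Proof.
move=> x0; have := expR_ge1Dx (x - 1).
rewrite addrC subrK -{1}(lnK x0) ler_expR //.
Qed.

Lemma nlog_bound (p b : R) : 0 < p -> p^-1 - 1 <= b -> (nlog p <= b%:E)%E.
Proof.
move=> p0 h; rewrite /nlog p0 lee_fin -lnV ?posrE //.
apply: (le_trans _ h); apply: ln_le_sub1; by rewrite invr_gt0.
Qed.
End Helpers.
Arguments nlog_le {R p d}.
Arguments nlog_mono {R a p d}.
Arguments nlog_bound {R p b}.

Theorem corollary2 (R : realType) (T : nat) (loc : option 'I_T) :
  (forall (P : option 'I_T -> R) (delta : R),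
     is_TP P ->
     (H_TP P loc <= delta%:E)%E ->
     forall k : 'I_T, (H_OOD (fun k => P (Some k)) k loc <= delta%:E)%E)
  /\
  (forall (q : 'I_T -> R) (delta : 'I_T -> R),
     is_OOD q ->
     (forall k : 'I_T, (H_OOD q k loc <= (delta k)%:E)%E) ->
     (H_TP (TP_of_OOD q) loc <=
       (Num.max
          ((\sum_(k < T) ind R loc k * expR (delta k)) *
           (\sum_(k < T) (1 + ind R loc k) * (1 - expR (- delta k))))
          ((\prod_(k < T) expR (delta k)) *
           (\sum_(k < T) (1 - expR (- delta k)))))%:E)%E).
Proof.
split.
  move=> P delta [P0 P1] H k; rewrite /H_OOD /H_TP in H *.
  have [p0 _] := nlog_le H.
  case: loc H p0 => [k0|] H p0.
    case: eqP => [[<-]|ne] //.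
    apply: (nlog_mono p0 _ H).
    have nek : Some k != Some k0 by apply/eqP => -[e]; apply: ne; rewrite e.
    move: P1; rewrite (bigD1 (Some k0)) // (bigD1 (Some k)) //=.
    have : 0 <= \sum_(i | (i != Some k0) && (i != Some k)) P i by apply: sumr_ge0.
    lra.
  apply: (nlog_mono p0 _ H).
  move: P1; rewrite (bigD1 None) // (bigD1 (Some k)) //=.
  have : 0 <= \sum_(i | (i != None) && (i != Some k)) P i by apply: sumr_ge0.
  lra.
move=> q delta Hq Hd.
have Hin : forall k, loc = Some k -> 0 < q k /\ expR (- delta k) <= q k.
  move=> k e; have := Hd k; rewrite /H_OOD e eqxx; exact: nlog_le.
have Hout : forall k, loc != Some k -> 0 < 1 - q k /\ expR (- delta k) <= 1 - q k.
  move=> k e; have := Hd k; rewrite /H_OOD (negbTE e); exact: nlog_le.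
have Hle1 : forall k, expR (- delta k) <= 1.
  move=> k; have /andP [q0 q1] := Hq k.
  case: (eqVneq loc (Some k)) => e.
    have [_ h] := Hin k e; exact: le_trans h q1.
  have [_ h] := Hout k e; apply: le_trans h _; rewrite lerBlDr lerDl //.
rewrite /H_TP /TP_of_OOD.
case: loc Hd Hin Hout => [k0|] Hd Hin Hout.
  have [q0p q0e] := Hin k0 erefl.
  have Ho : forall k, k != k0 -> 0 < 1 - q k /\ expR (- delta k) <= 1 - q k.
    by move=> k ne; apply: Hout; apply/eqP => -[e]; move/eqP: ne; rewrite e.
  have -> : \sum_(k < T) ind R (Some k0) k * expR (delta k) = expR (delta k0).
    rewrite (bigD1 k0) //= big1 ?addr0; first by rewrite /ind eqxx mul1r.
    move=> k ne; rewrite /ind; case: eqP => [[e]|_]; last by rewrite mul0r.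
    by move/eqP: ne; rewrite e.
  set D' := \sum_(k | k != k0) (1 - expR (- delta k)).
  have -> : \sum_(k < T) (1 + ind R (Some k0) k) * (1 - expR (- delta k))
      = 2 * (1 - expR (- delta k0)) + D'.
    rewrite (bigD1 k0) //= /ind eqxx; congr (_ + _); apply: eq_bigr => k ne.
    case: eqP => [[e]|_]; last by rewrite addr0 mul1r.
    by move/eqP: ne; rewrite e.
  rewrite (bigD1 k0) //= [\prod_(k < T) _](bigD1 k0) //=.
  set S' := \sum_(k | k != k0) q k.
  set Pr' := \prod_(k | k != k0) (1 - q k).
  have Pr'0 : 0 <= Pr' by apply: prodr_ge0 => k /Ho [/ltW].
  have Pr'1 : Pr' <= 1.
    apply: prodr_ile1 => k /Ho [/ltW -> _]; have /andP [q0 _] := Hq k.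
    by rewrite lerBlDr lerDl.
  have S'0 : 0 <= S' by apply: sumr_ge0 => k _; have /andP [] := Hq k.
  have S'D : S' <= D' by apply: ler_sum => k /Ho [_ h]; rewrite lerBrDr -lerBrDl.
  have E1 : expR (delta k0) * expR (- delta k0) = 1 by apply: expRxMexpNx_1.
  have Ep : 0 < expR (delta k0) by apply: expR_gt0.
  have /andP [_ q01] := Hq k0.
  have e0 := Hle1 k0.
  set E := expR (delta k0) in E1 Ep *; set e := expR (- delta k0) in E1 q0e e0 *.
  have qE : 1 <= q k0 * E by rewrite -E1 mulrC ler_pM2r.
  have h1 : (1 - q k0) * Pr' <= 1 - q k0 by rewrite ler_piMr // subr_ge0.
  have den0 : 0 < q k0 + S' + (1 - q k0) * Pr'.
    by rewrite -addrA ltr_wpDr // addr_ge0 // mulr_ge0 // subr_ge0.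
  apply: nlog_bound; first by rewrite divr_gt0.
  rewrite le_max; apply/orP; left.
  rewrite invf_div.
  have -> : (q k0 + S' + (1 - q k0) * Pr') / q k0 - 1 = (S' + (1 - q k0) * Pr') / q k0.
    by field; rewrite gt_eqF.
  rewrite ler_pdivrMr //.
  move: qE h1 S'D S'0 e0 q0e Ep; clear; nra.
have Ho : forall k, 0 < 1 - q k /\ expR (- delta k) <= 1 - q k by move=> k; exact: Hout.
set S := \sum_(k < T) (1 - expR (- delta k)).
set Sq := \sum_(k < T) q k.
set Pr := \prod_(k < T) (1 - q k).
set E := \prod_(k < T) expR (delta k).
set m := \prod_(k < T) expR (- delta k).
have m0 : 0 < m by apply: prodr_gt0 => k _; apply: expR_gt0.
have mPr : m <= Pr by apply: ler_prod => k _; rewrite expR_ge0 /=; case: (Ho k).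
have Em : E * m = 1.
  by rewrite /E /m -big_split /=; apply: big1 => k _; apply: expRxMexpNx_1.
have E0 : 0 <= E by apply: prodr_ge0 => k _; apply: expR_ge0.
have SqS : Sq <= S by apply: ler_sum => k _; case: (Ho k) => _ h; rewrite lerBrDr -lerBrDl.
have Sq0 : 0 <= Sq by apply: sumr_ge0 => k _; have /andP [] := Hq k.
have Pr0 : 0 < Pr by apply: lt_le_trans mPr.
have EPr : 1 <= E * Pr by rewrite -Em ler_wpM2l.
have den0 : 0 < Sq + Pr by rewrite ltr_wpDl.
apply: nlog_bound; first by rewrite divr_gt0.
rewrite le_max; apply/orP; right.
rewrite invf_div.
have -> : (Sq + Pr) / Pr - 1 = Sq / Pr by field; rewrite gt_eqF.
rewrite ler_pdivrMr //.
move: EPr SqS Sq0 E0 Pr0; clear; nra.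
Qed.
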